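(* Let $R$ be an arbitrary unital associative commutative ring, let $k$ be a positive integer, let $m_1,\dots,m_k$ be positive integers and put $N_k=\sum_{i=1}^k m_i-k+1$. Then there exists an associative $R$-algebra $A$ such that \[ T^{(m_1)}(A)\cdots T^{(m_k)}(A)\not\subseteq T^{(1+N_k)}(A). \]
   Context: For an associative algebra $A$, left-normed commutators are defined by $[a_1,a_2]=a_1a_2-a_2a_1$ and $[a_1,\dots,a_{n-1},a_n]=[[a_1,\dots,a_{n-1}],a_n]$ for $n\ge 3$. For $n\ge 2$, $T^{(n)}(A)$ denotes the two-sided ideal of $A$ generated by all commutators $[a_1,\dots,a_n]$ with $a_i\in A$, and $T^{(1)}(A)=A$. *)

(* Defs.v *)
From HB Require Import structures.
From mathcomp Require Import all_boot all_order all_algebra.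
Set Implicit Arguments. Unset Strict Implicit. Unset Printing Implicit Defensive.
Import GRing.Theory.
Local Open Scope ring_scope.

(* Left-normed commutator: lcomm a [:: a2; ...; an] = [a, a2, ..., an],
   with [a] = a, [c, b] = c*b - b*c, [a1,...,an] = [[a1,...,a(n-1)], an]. *)
Definition lcomm (A : nzRingType) (a : A) (s : seq A) : A :=
  foldl (fun c b => c * b - b * c) a s.

Definition is_lcomm (A : nzRingType) (n : nat) (x : A) : Prop :=
  exists (a : A) (s : seq A), size s = n.-1 /\ x = lcomm a s.

Definition in_ideal_gen (A : nzRingType) (P : A -> Prop) (x : A) : Prop :=
  exists (n : nat) (u c v : 'I_n -> A),
    (forall i, P (c i)) /\ x = \sum_(i < n) u i * c i * v i.

Definition T_ideal (A : nzRingType) (n : nat) (x : A) : Prop :=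
  in_ideal_gen (is_lcomm n) x.

Definition in_T_product (A : nzRingType) (k : nat) (m : 'I_k -> nat) (y : A) : Prop :=
  exists (n : nat) (x : 'I_n -> 'I_k -> A),
    (forall i j, T_ideal (m j) (x i j)) /\
    y = \sum_(i < n) \prod_(j < k) x i j.

(* Main.v *)
Require Import Defs.
From HB Require Import structures.
From mathcomp Require Import all_boot all_order all_algebra.
From mathcomp Require Import ring boolp.
Set Implicit Arguments. Unset Strict Implicit. Unset Printing Implicit Defensive.
Import GRing.Theory.
Local Open Scope ring_scope.
Section Amb.
Variables (R : comNzRingType) (n : nat).
Local Notation S := {poly R}.
Local Notation MS := 'M[S]_(n.+1).

Definition xm : MS := \matrix_(i, j) ((i == (j.+1)%N :> nat)%:R).
Definition ym : MS := diag_mx (\row_(j < n.+1) ((j : nat)%:R * 'X)).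
Definition tS : S := 'X.
Definition tm : MS := tS%:M.

Lemma tm_comm (M : MS) : tm * M = M * tm.
Proof. by rewrite /tm -!mulmxE scalar_mxC. Qed.

Lemma yx : ym * xm = xm * (ym + tm).
Proof.
apply/matrixP => i j.
rewrite -!mulmxE mulmxDr mul_diag_mx mul_mx_diag /tm mul_mx_scalar !mxE.
case: eqP => [->|_] /=; last by rewrite ?(mulr0,mul0r,addr0).
rewrite /tS -natr1; ring.

Qed.

Lemma cfu : commr_rmorph (@scalar_mx S n.+1) ym.
Proof. by move=> c; rewrite /GRing.comm -!mulmxE scalar_mxC. Qed.

Local Notation P := (horner_morph cfu).

Lemma P_tm q : P (tS%:P * q) = tm * P q.
Proof. by rewrite rmorphM /= horner_morphC. Qed.

Lemma comp_shift (g : {poly S}) : exists e, g \Po ('X + tS%:P) = g + tS%:P * e.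
Proof.
elim/poly_ind: g => [|p c [e He]]; first by exists 0; rewrite comp_poly0 mulr0 addr0.
exists (e * 'X + p + tS%:P * e).
rewrite comp_polyD comp_polyM comp_polyX comp_polyC He; ring.
Qed.

Lemma Px_exact g : P g * xm = xm * P (g \Po ('X + tS%:P)).
Proof.
elim/poly_ind: g => [|p c IH]; first by rewrite comp_poly0 rmorph0 mul0r mulr0.
rewrite comp_polyD comp_polyM comp_polyX comp_polyC !rmorphD !rmorphM /=.
rewrite !horner_morphX !horner_morphC rmorphD /= horner_morphX horner_morphC.
rewrite mulrDl -mulrA yx mulrA IH -!mulrA mulrDr.
by rewrite [in RHS]mulrDr; congr (_ + _); rewrite -!mulmxE scalar_mxC.
Qed.

Lemma Pxb g b : exists e, P g * xm ^+ b = xm ^+ b * P (g + tS%:P * e).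
Proof.
elim: b g => [|b IH] g; first by exists 0; rewrite expr0 mulr0 addr0 mulr1 mul1r.
have [e He] := IH g.
rewrite exprSr mulrA He -mulrA Px_exact.
have [e2 He2] := comp_shift (g + tS%:P * e).
exists (e + e2); rewrite He2 mulrA; congr (_ * P _); ring.
Qed.

Definition inA (M : MS) : Prop :=
  exists s : seq (nat * {poly S}), M = \sum_(p <- s) xm ^+ p.1 * P p.2.

Lemma inA0 : inA 0.
Proof. by exists [::]; rewrite big_nil. Qed.

Lemma inA_term a g : inA (xm ^+ a * P g).
Proof. by exists [:: (a, g)]; rewrite big_seq1. Qed.

Lemma inA1 : inA 1.
Proof. by have := inA_term 0 1; rewrite expr0 rmorph1 mulr1. Qed.

Lemma inAD M N : inA M -> inA N -> inA (M + N).
Proof. by move=> [s1 ->] [s2 ->]; exists (s1 ++ s2); rewrite big_cat. Qed.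

Lemma inAN M : inA M -> inA (- M).
Proof.
move=> [s ->]; exists (map (fun p => (p.1, - p.2)) s).
by rewrite big_map -sumrN; apply: eq_bigr => p _; rewrite rmorphN mulrN.
Qed.

Lemma inA_sum (I : Type) (r : seq I) (F : I -> MS) :
  (forall i, inA (F i)) -> inA (\sum_(i <- r) F i).
Proof. by move=> H; apply: (big_ind inA) => //; [exact: inA0 | exact: inAD]. Qed.

Lemma inAM M N : inA M -> inA N -> inA (M * N).
Proof.
move=> [s1 ->] [s2 ->]; rewrite mulr_suml; apply: inA_sum => p.
rewrite mulr_sumr; apply: inA_sum => q.
have [e He] := Pxb p.2 q.1.
by rewrite -mulrA (mulrA (P _)) He !mulrA -exprD -mulrA -rmorphM; apply: inA_term.
Qed.

Lemma inA_scal c : inA c%:M.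
Proof. by have := inA_term 0 c%:P; rewrite expr0 mul1r horner_morphC. Qed.

Lemma inA_x : inA xm.
Proof. by have := inA_term 1 1; rewrite expr1 rmorph1 mulr1. Qed.

Lemma inA_y : inA ym.
Proof. by have := inA_term 0 'X; rewrite expr0 mul1r horner_morphX. Qed.

Definition Qt (z : MS) := exists C, inA C /\ z = tm * C.

Lemma Qt_sum (I : Type) (r : seq I) (F : I -> MS) :
  (forall i, Qt (F i)) -> Qt (\sum_(i <- r) F i).
Proof.
move=> H; apply: (big_ind Qt) => //.
  by exists 0; split; [exact: inA0 | rewrite mulr0].
by move=> z1 z2 [C1 [h1 ->]] [C2 [h2 ->]]; exists (C1 + C2); split;
  [exact: inAD | rewrite mulrDr].
Qed.

Lemma comm_inA M N : inA M -> inA N -> Qt (M * N - N * M).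
Proof.
move=> [s1 ->] [s2 ->].
have E (r1 r2 : seq (nat * {poly S})) :
   (\sum_(p <- r1) xm ^+ p.1 * P p.2) * (\sum_(q <- r2) xm ^+ q.1 * P q.2) =
   \sum_(p <- r1) \sum_(q <- r2) (xm ^+ p.1 * P p.2) * (xm ^+ q.1 * P q.2).
  by rewrite mulr_suml; apply: eq_bigr => p _; rewrite mulr_sumr.
rewrite !E (exchange_big _ s2 s1) -sumrB; apply: Qt_sum => p.
rewrite -sumrB; apply: Qt_sum => q.
have [e1 He1] := Pxb p.2 q.1.
have [e2 He2] := Pxb q.2 p.1.
rewrite -mulrA (mulrA (P _)) He1 -(mulrA (xm ^+ q.1)) (mulrA (P q.2)) He2.
rewrite !mulrA -!exprD addnC -!mulrA -!rmorphM -mulrBr -rmorphB.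
exists (xm ^+ (p.1 + q.1) * P (e1 * q.2 - e2 * p.2)); split; first exact: inA_term.
have -> : (p.2 + tS%:P * e1) * q.2 - (q.2 + tS%:P * e2) * p.2 =
   tS%:P * (e1 * q.2 - e2 * p.2) by ring.
by rewrite rmorphM /= horner_morphC (addnC q.1) mulrA -/tm -tm_comm -mulrA.
Qed.

End Amb.

Section Sub.
Variables (R : comNzRingType) (n : nat).
Local Notation S := {poly R}.
Local Notation MS := 'M[S]_(n.+1).

Definition pA : pred MS := fun M => `[< inA M >].

Lemma pA_closed : subring_closed pA.
Proof.
split.
- by apply/asboolP; apply: inA1.
- move=> u v /asboolP hu /asboolP hv; apply/asboolP; apply: inAD => //; exact: inAN.
- move=> u v /asboolP hu /asboolP hv; apply/asboolP; exact: inAM.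
Qed.

HB.instance Definition _ := GRing.isSubringClosed.Build MS pA pA_closed.

Record Aty := MkA { aval :> MS; _ : pA aval }.
HB.instance Definition _ := [isSub for aval].
HB.instance Definition _ := [Choice of Aty by <:].
HB.instance Definition _ := [SubChoice_isSubNzRing of Aty by <:].

Lemma avalM (a b : Aty) : aval (a * b) = aval a * aval b.
Proof. by []. Qed.
Lemma avalB (a b : Aty) : aval (a - b) = aval a - aval b.
Proof. by []. Qed.

Definition cA (c : R) : Aty := MkA (asboolT (@inA_scal R n (c%:P : S))).


Lemma cA_val c : aval (cA c) = (c%:P : S)%:M. Proof. by []. Qed.

Lemma cA_comm c (a : Aty) : cA c * a = a * cA c.
Proof. by apply: val_inj; rewrite /= -!mulmxE scalar_mxC. Qed.

Lemma cAM a b : cA a * cA b = cA (a * b).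
Proof. by apply: val_inj; rewrite /= polyCM -!mulmxE scalar_mxM. Qed.

Lemma cAD a b : cA (a + b) = cA a + cA b.
Proof. by apply: val_inj; rewrite /= polyCD raddfD. Qed.

Lemma cA1 : cA 1 = 1.
Proof. by apply: val_inj. Qed.

Definition scaleA (c : R) (a : Aty) : Aty := cA c * a.

Lemma scaleA_A a b v : scaleA a (scaleA b v) = scaleA (a * b) v.
Proof. by rewrite /scaleA mulrA cAM. Qed.
Lemma scaleA_1 : left_id 1 scaleA.
Proof. by move=> v; rewrite /scaleA cA1 mul1r. Qed.
Lemma scaleA_Dr : right_distributive scaleA +%R.
Proof. by move=> c u v; rewrite /scaleA mulrDr. Qed.
Lemma scaleA_Dl v : {morph scaleA^~ v: a b / a + b}.
Proof. by move=> a b; rewrite /scaleA cAD mulrDl. Qed.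

HB.instance Definition _ := GRing.Zmodule_isLmodule.Build R Aty
  scaleA_A scaleA_1 scaleA_Dr scaleA_Dl.

Lemma scaleA_Al (a : R) (u v : Aty) : a *: (u * v) = (a *: u) * v.
Proof. by rewrite /GRing.scale /= /scaleA mulrA. Qed.
HB.instance Definition _ := GRing.Lmodule_isLalgebra.Build R Aty scaleA_Al.

Lemma scaleA_Ar (a : R) (u v : Aty) : a *: (u * v) = u * (a *: v).
Proof. by rewrite /GRing.scale /= /scaleA mulrA cA_comm -mulrA. Qed.
HB.instance Definition _ := GRing.Lalgebra_isAlgebra.Build R Aty scaleA_Ar.

Definition A_alg : algType R := Aty.

End Sub.

Section Main.
Variables (R : comNzRingType) (n : nat).
Local Notation S := {poly R}.
Local Notation MS := 'M[S]_(n.+1).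
Local Notation A := (Aty R n).

Lemma inA_of (a : A) : inA (aval a).
Proof. by apply/asboolP; case: a. Qed.

Definition tA : A := MkA (asboolT (@inA_scal R n (tS R))).
Definition xA : A := MkA (asboolT (@inA_x R n)).
Definition yA : A := MkA (asboolT (@inA_y R n)).

Lemma tA_comm (a : A) : tA * a = a * tA.
Proof. by apply: val_inj; rewrite /= -!mulmxE scalar_mxC. Qed.

Lemma tAX_comm p (a : A) : tA ^+ p * a = a * tA ^+ p.
Proof.
elim: p => [|p IH]; first by rewrite expr0 mul1r mulr1.
by rewrite exprS -mulrA IH mulrA tA_comm -mulrA.
Qed.

Lemma commA (a b : A) : exists c : A, a * b - b * a = tA * c.
Proof.
have [C [hC E]] := comm_inA (inA_of a) (inA_of b).
exists (MkA (asboolT hC)); apply: val_inj; rewrite /= -E //.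
Qed.

Lemma yxA : yA * xA = xA * yA + tA * xA.
Proof.
apply: val_inj; rewrite /= yx mulrDr; congr (_ + _).
by rewrite /tm -!mulmxE scalar_mxC.
Qed.

Lemma lcomm_t (s : seq A) : forall (a c : A) p, a = tA ^+ p * c ->
  exists c', lcomm a s = tA ^+ (p + size s) * c'.
Proof.
elim: s => [|b s IH] a c p Ea; first by exists c; rewrite addn0.
rewrite /lcomm /=.
have [c2 Ec2] := commA c b.
have := IH (a * b - b * a) c2 p.+1.
rewrite /lcomm addnS -addSn; apply.
by rewrite Ea (mulrA b) -tAX_comm -!mulrA -mulrBr Ec2 mulrA -exprSr.
Qed.

Lemma is_lcomm_t m (z : A) : is_lcomm m z -> exists c, z = tA ^+ m.-1 * c.
Proof.
move=> [a [s [Hs ->]]]; have := @lcomm_t s a a 0.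
by rewrite expr0 mul1r add0n Hs => /(_ erefl).
Qed.

Lemma T_ideal_t m (z : A) : T_ideal m z -> exists c, z = tA ^+ m.-1 * c.
Proof.
move=> [r [u [c [v [Hc ->]]]]].
have H i : exists w : A, u i * c i * v i = tA ^+ m.-1 * w.
  have [w Ew] := is_lcomm_t (Hc i).
  by exists (u i * w * v i); rewrite Ew mulrA -tAX_comm !mulrA.
apply: (big_ind (fun z : A => exists w, z = tA ^+ m.-1 * w)) => //.
  by exists 0; rewrite mulr0.
by move=> z1 z2 [w1 ->] [w2 ->]; exists (w1 + w2); rewrite mulrDr.
Qed.

End Main.

Lemma xm_pow (R : comNzRingType) (n a : nat) (i j : 'I_n.+1) :
  (xm R n ^+ a) i j = ((i : nat) == (j + a)%N)%:R.
Proof.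
elim: a i => [|a IH] i.
  by rewrite expr0 addn0 !mxE.
rewrite exprS -mulmxE mxE.
case: i => [[|i'] Hi] /=.
  by rewrite addnS big1 // => l _; rewrite mxE mul0r.
have Hi' : (i' < n.+1)%N by apply: ltnW.
rewrite (bigD1 (Ordinal Hi')) //= big1 ?addr0.
  by rewrite mxE IH /= eqxx mul1r addnS eqSS.
move=> l Hl; rewrite mxE IH /= eqSS.
case: eqP => [E|]; last by rewrite mul0r.
by exfalso; move/eqP: Hl; apply; apply: val_inj; rewrite /= E.
Qed.

Section Final.
Variables (R : comNzRingType) (n : nat).
Local Notation A := (Aty R n).

Definition yA' : A := - yA R n.

Lemma xy' : xA R n * yA' - yA' * xA R n = tA R n * xA R n.
Proof. by rewrite /yA' mulrN mulNr yxA opprK addrA addNr add0r. Qed.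

Lemma lc l : forall r, lcomm (tA R n ^+ r * xA R n) (nseq l yA') = tA R n ^+ (r + l) * xA R n.
Proof.
elim: l => [|l IH] r; first by rewrite addn0.
rewrite /= /lcomm /= -/(lcomm _ _).
have -> : tA R n ^+ r * xA R n * yA' - yA' * (tA R n ^+ r * xA R n) = tA R n ^+ r.+1 * xA R n.
  by rewrite (mulrA yA') -tAX_comm -!mulrA -mulrBr xy' exprSr mulrA.
by rewrite IH addnS.
Qed.

Lemma prod_tx (I : Type) (r : seq I) (f : I -> nat) :
  \prod_(i <- r) (tA R n ^+ f i * xA R n) = tA R n ^+ (\sum_(i <- r) f i) * xA R n ^+ size r.
Proof.
elim: r => [|i r IH]; first by rewrite !big_nil expr0 mulr1.
rewrite !big_cons IH /= -mulrA (mulrA (xA R n)) -tAX_comm -!mulrA -exprS.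
by rewrite mulrA -exprD.
Qed.

Lemma aval_exp (a : A) e : aval (a ^+ e) = aval a ^+ e.
Proof.
elim: e => [|e IH]; first by rewrite !expr0.
by rewrite !exprS -IH.
Qed.

End Final.

Unset Implicit Arguments.
Set Strict Implicit.

Theorem corollary1p6 (R : comNzRingType) (k : nat) (m : 'I_k -> nat) :
  (0 < k)%N -> (forall i, 0 < m i)%N ->
  let N := ((\sum_(i < k) m i) - k + 1)%N in
  exists A : algType R,
    ~ (forall x : A, in_T_product m x -> T_ideal (1 + N) x).
Proof.
move=> k0 m0 N; exists (A_alg R k) => H.
pose c (j : 'I_k) : Aty R k := lcomm (xA R k) (nseq (m j).-1 (yA' R k)).
pose z := \prod_(j < k) c j.
have Hz : in_T_product m (z : A_alg R k).
  exists 1%N, (fun _ j => c j); split; last by rewrite big_ord1.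
  move=> _ j; exists 1%N, (fun _ => 1), (fun _ => c j), (fun _ => 1); split.
    by move=> _; exists (xA R k), (nseq (m j).-1 (yA' R k)); rewrite size_nseq.
  by rewrite big_ord1 mul1r mulr1.
have [w Ew] := T_ideal_t (H z Hz).
have Ec j : c j = tA R k ^+ (m j).-1 * xA R k.
  by have := lc R k (m j).-1 0; rewrite expr0 mul1r add0n.
have Esum : (\sum_(j < k) (m j).-1 = N.-1)%N.
  have : (\sum_(j < k) m j = \sum_(j < k) (m j).-1 + k)%N.
    transitivity (\sum_(j < k) ((m j).-1 + 1))%N.
      by apply: eq_bigr => j _; rewrite addn1 prednK.
    by rewrite big_split /= sum1_card card_ord.
  by rewrite /N => ->; rewrite addnK addn1.
have Ez : z = tA R k ^+ N.-1 * xA R k ^+ k.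
  rewrite /z (eq_bigr _ (fun j _ => Ec j)) prod_tx -Esum.
  by rewrite /index_enum -enumT size_enum_ord.
move: Ew; rewrite Ez /= => /(congr1 (fun M : Aty R k => aval M (@ord_max k) (@ord0 k))).
rewrite /= !aval_exp /= /tm -!rmorphXn /= -!mulmxE !mul_scalar_mx !mxE xm_pow /=.
rewrite add0n eqxx mulr1 => /(congr1 (fun p : {poly R} => p`_N.-1)).
rewrite coefXn coefXnM eqxx ifT; last by rewrite /N addn1.
by move/eqP; rewrite oner_eq0.
Qed.
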